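(* Let $d\ge 3$. In every model of $\mathsf{SR}$, for any inertial observers $m$ and $k$, the worldview transformation $\mathsf{w}_{mk}$ is a Poincaré transformation of $Q^d$.
   Context: Language: two-sorted first-order language with sorts $B$ (bodies), $Q$ (quantities), unary $\mathsf{IOb}$ on $B$, binary $\mathsf{Ph}$ on $B$, operations $+,\cdot$ and relation $\le$ on $Q$, and $(d+2)$-ary $\mathsf{W}$ (first two arguments of sort $B$, rest of sort $Q$). $\mathsf{time}(\bar x,\bar y)=x_1-y_1$, $\mathsf{space}^2(\bar x,\bar y)=\sum_{i=2}^d(x_i-y_i)^2$. Write $\mathsf{ev}_m(\bar x)=\mathsf{ev}_k(\bar y)$ for $\forall b[\mathsf{W}(m,b,\bar x)\leftrightarrow\mathsf{W}(k,b,\bar y)]$. $\mathsf{SR}=\mathsf{SPR}^++\mathsf{AxLight}+\mathsf{AxOField}+\mathsf{AxEv}+\mathsf{AxSelf}+\mathsf{AxSymD}$, where: $\mathsf{SPR}^+$: for every formula $\varphi(h,\bar x)$ with at most one free variable $h$ of sort $B$, $\forall m k\bar x[\mathsf{IOb}(m)\land\mathsf{IOb}(k)\to(\varphi(m,\bar x)\leftrightarrow\varphi(k,\bar x))]$. $\mathsf{AxLight}$: $\exists m\,c\,[\mathsf{IOb}(m)\land c>0\land\forall\bar x\bar y\,(\exists p b[\mathsf{Ph}(p,b)\land\mathsf{W}(m,p,\bar x)\land\mathsf{W}(m,p,\bar y)]\leftrightarrow \mathsf{space}^2(\bar x,\bar y)=c^2\mathsf{time}(\bar x,\bar y)^2)]$.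 $\mathsf{AxOField}$: $\langle Q,+,\cdot,\le\rangle$ is an ordered field. $\mathsf{AxEv}$: $\mathsf{IOb}(m)\land\mathsf{IOb}(k)\to\exists\bar y\,\mathsf{ev}_m(\bar x)=\mathsf{ev}_k(\bar y)$ (for all $m,k,\bar x$). $\mathsf{AxSelf}$: $\mathsf{IOb}(m)\to\forall\bar x[\mathsf{W}(m,m,\bar x)\leftrightarrow x_2=\dots=x_d=0]$. $\mathsf{AxSymD}$: (i) if $\mathsf{IOb}(m),\mathsf{IOb}(k)$, $x_1=y_1$, $x'_1=y'_1$, $\mathsf{ev}_m(\bar x)=\mathsf{ev}_k(\bar x')$ and $\mathsf{ev}_m(\bar y)=\mathsf{ev}_k(\bar y')$, then $\mathsf{space}^2(\bar x,\bar y)=\mathsf{space}^2(\bar x',\bar y')$; (ii) $\mathsf{IOb}(m)\to\exists pb[\mathsf{Ph}(p,b)\land\mathsf{W}(m,p,0,\dots,0)\land\mathsf{W}(m,p,1,1,0,\dots,0)]$. Worldview transformation: $\mathsf{w}_{mk}=\{\langle\bar x,\bar y\rangle\in Q^d\times Q^d:\forall b[\mathsf{W}(m,b,\bar x)\leftrightarrow\mathsf{W}(k,b,\bar y)]\}$. A Poincaré transformation is an affine bijection $P:Q^d\to Q^d$ such that $\mathsf{time}(\bar x,\bar y)^2-\mathsf{space}^2(\bar x,\bar y)=\mathsf{time}(P\bar x,P\bar y)^2-\mathsf{space}^2(P\bar x,P\bar y)$ for all $\bar x,\bar y$. *)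

(* Defs.v *)
From HB Require Import structures.
From mathcomp Require Import all_boot all_order all_algebra.
Set Implicit Arguments. Unset Strict Implicit. Unset Printing Implicit Defensive.
Import Order.TTheory GRing.Theory Num.Theory.
Local Open Scope ring_scope.

(* ---------- Coordinates: Q^d is represented by 'rV[Q]_d, coordinate
   x_1 is the column with index 0, x_2..x_d the columns with index >= 1. *)
Section Geometry.
Variables (Q : realFieldType) (d : nat).

Definition time (x y : 'rV[Q]_d) : Q :=
  \sum_(i < d | (i : nat) == 0%N) (x 0 i - y 0 i).

Definition space2 (x y : 'rV[Q]_d) : Q :=
  \sum_(i < d | (0 < (i : nat))%N) (x 0 i - y 0 i) ^+ 2.

Definition pt11 : 'rV[Q]_d := \row_(i < d) (if ((i : nat) < 2)%N then 1 else 0).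

Definition affine_map (P : 'rV[Q]_d -> 'rV[Q]_d) : Prop :=
  exists (A : 'M[Q]_d) (b : 'rV[Q]_d), forall x, P x = x *m A + b.

Definition poincare (P : 'rV[Q]_d -> 'rV[Q]_d) : Prop :=
  [/\ affine_map P, bijective P &
      forall x y, time x y ^+ 2 - space2 x y = time (P x) (P y) ^+ 2 - space2 (P x) (P y)].

End Geometry.

(* ---------- First-order syntax of the two-sorted language (deep embedding),
   needed for the axiom schema SPR^+.  Variables are named by nat. *)
Inductive qterm : Type :=
  | QV of nat
  | QAdd of qterm & qterm
  | QMul of qterm & qterm.

Inductive form (d : nat) : Type :=
  | FIOb of nat
  | FPh of nat & nat
  | FW of nat & nat & ('I_d -> qterm)
  | FLe of qterm & qterm
  | FEqQ of qterm & qterm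
  | FEqB of nat & nat
  | FFalse
  | FNot of form d
  | FAnd of form d & form d
  | FOr of form d & form d
  | FImp of form d & form d
  | FAllB of nat & form d
  | FExB of nat & form d
  | FAllQ of nat & form d
  | FExQ of nat & form d.

Arguments FFalse {d}.

Definition upd (T : Type) (e : nat -> T) (n : nat) (v : T) : nat -> T :=
  fun j => if j == n then v else e j.

Fixpoint qeval (Q : realFieldType) (eQ : nat -> Q) (t : qterm) : Q :=
  match t with
  | QV n => eQ n
  | QAdd t1 t2 => qeval eQ t1 + qeval eQ t2
  | QMul t1 t2 => qeval eQ t1 * qeval eQ t2
  end.

Fixpoint fvB (d : nat) (f : form d) : seq nat :=
  match f with
  | FIOb n => [:: n]
  | FPh n1 n2 => [:: n1; n2]
  | FW n1 n2 _ => [:: n1; n2]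
  | FLe _ _ | FEqQ _ _ | FFalse => [::]
  | FEqB n1 n2 => [:: n1; n2]
  | FNot g => fvB g
  | FAnd g h | FOr g h | FImp g h => fvB g ++ fvB h
  | FAllB n g | FExB n g => [seq j <- fvB g | j != n]
  | FAllQ _ g | FExQ _ g => fvB g
  end.

Section Semantics.
Variables (Q : realFieldType) (d : nat) (B : Type)
  (IOb : B -> Prop) (Ph : B -> B -> Prop) (W : B -> B -> 'rV[Q]_d -> Prop).

Fixpoint holds (eB : nat -> B) (eQ : nat -> Q) (f : form d) : Prop :=
  match f with
  | FIOb n => IOb (eB n)
  | FPh n1 n2 => Ph (eB n1) (eB n2)
  | FW n1 n2 ts => W (eB n1) (eB n2) (\row_i qeval eQ (ts i))
  | FLe t1 t2 => qeval eQ t1 <= qeval eQ t2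
  | FEqQ t1 t2 => qeval eQ t1 = qeval eQ t2
  | FEqB n1 n2 => eB n1 = eB n2
  | FFalse => False
  | FNot g => ~ holds eB eQ g
  | FAnd g h => holds eB eQ g /\ holds eB eQ h
  | FOr g h => holds eB eQ g \/ holds eB eQ h
  | FImp g h => holds eB eQ g -> holds eB eQ h
  | FAllB n g => forall b : B, holds (upd eB n b) eQ g
  | FExB n g => exists b : B, holds (upd eB n b) eQ g
  | FAllQ n g => forall q : Q, holds eB (upd eQ n q) g
  | FExQ n g => exists q : Q, holds eB (upd eQ n q) g
  end.

Definition ev_eq (m : B) (x : 'rV[Q]_d) (k : B) (y : 'rV[Q]_d) : Prop :=
  forall b, W m b x <-> W k b y.

Definition wview (m k : B) (x y : 'rV[Q]_d) : Prop := ev_eq m x k y.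

(* SPR^+ : for every formula phi whose only free body variable is (at most)
   variable 0 (= h), and every valuation of the quantity variables x-bar. *)
Definition SPRplus : Prop :=
  forall phi : form d, all (fun j => j == 0%N) (fvB phi) ->
  forall (eB : nat -> B) (eQ : nat -> Q) (m k : B), IOb m -> IOb k ->
    (holds (upd eB 0 m) eQ phi <-> holds (upd eB 0 k) eQ phi).

Definition AxLight : Prop :=
  exists (m : B) (c : Q), [/\ IOb m, 0 < c &
    forall x y : 'rV[Q]_d,
      (exists p b, [/\ Ph p b, W m p x & W m p y]) <->
      space2 x y = c ^+ 2 * time x y ^+ 2].

Definition AxEv : Prop :=
  forall (m k : B) (x : 'rV[Q]_d), IOb m -> IOb k -> exists y, ev_eq m x k y.

Definition AxSelf : Prop :=
  forall m : B, IOb m ->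
    forall x : 'rV[Q]_d, W m m x <-> (forall i : 'I_d, (0 < (i : nat))%N -> x 0 i = 0).

Definition AxSymD : Prop :=
  (forall (m k : B) (x y x' y' : 'rV[Q]_d), IOb m -> IOb k ->
     time x y = 0 -> time x' y' = 0 -> ev_eq m x k x' -> ev_eq m y k y' ->
     space2 x y = space2 x' y')
  /\
  (forall m : B, IOb m -> exists p b, [/\ Ph p b, W m p 0 & W m p (pt11 Q d)]).

(* AxOField is built in: Q is a realFieldType, i.e. an ordered field. *)
Definition SR : Prop := [/\ SPRplus, AxLight, AxEv, AxSelf & AxSymD].

End Semantics.

(* Main.v *)
Require Import Defs.
From HB Require Import structures.
From mathcomp Require Import all_boot all_order all_algebra.
From mathcomp Require Import ring lra.
From Stdlib Require Import IndefiniteDescription FunctionalExtensionality.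
Import Order.TTheory GRing.Theory Num.Theory.
Local Open Scope ring_scope.
Set Implicit Arguments. Unset Strict Implicit. Unset Printing Implicit Defensive.

Section Geo.
Variables (Q : realFieldType) (d : nat).
Hypothesis hd : (3 <= d)%N.

Let i0 : 'I_d := Ordinal (leq_trans (isT : (0 < 3)%N) hd).
Let i1 : 'I_d := Ordinal (leq_trans (isT : (1 < 3)%N) hd).
Let i2 : 'I_d := Ordinal (leq_trans (isT : (2 < 3)%N) hd).

Definition sg (i : 'I_d) : Q := if (i : nat) == 0%N then 1 else -1.
Definition Bf (x y : 'rV[Q]_d) : Q := \sum_i sg i * (x 0 i * y 0 i).
Definition qf (x : 'rV[Q]_d) : Q := Bf x x.
Definition Nl (x y : 'rV[Q]_d) : Prop := qf (x - y) = 0.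
Definition S2 (x : 'rV[Q]_d) : Q := \sum_(i < d | (0 < (i : nat))%N) x 0 i ^+ 2.

Lemma BfC x y : Bf x y = Bf y x.
Proof. by apply: eq_bigr => i _; rewrite [x 0 i * _]mulrC. Qed.

Lemma BfDl x y z : Bf (x + y) z = Bf x z + Bf y z.
Proof. rewrite /Bf -big_split /=; apply: eq_bigr => i _; rewrite !mxE; ring. Qed.

Lemma BfZl c x z : Bf (c *: x) z = c * Bf x z.
Proof. rewrite /Bf mulr_sumr; apply: eq_bigr => i _; rewrite !mxE; ring. Qed.

Lemma BfNl x z : Bf (- x) z = - Bf x z.
Proof. rewrite -scaleN1r BfZl; ring. Qed.

Lemma BfBl x y z : Bf (x - y) z = Bf x z - Bf y z.
Proof. by rewrite BfDl BfNl. Qed.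

Lemma BfDr x y z : Bf z (x + y) = Bf z x + Bf z y.
Proof. by rewrite BfC BfDl !(BfC z). Qed.
Lemma BfZr c x z : Bf z (c *: x) = c * Bf z x.
Proof. by rewrite BfC BfZl BfC. Qed.
Lemma BfNr x z : Bf z (- x) = - Bf z x.
Proof. by rewrite BfC BfNl BfC. Qed.
Lemma BfBr x y z : Bf z (x - y) = Bf z x - Bf z y.
Proof. by rewrite BfC BfBl !(BfC z). Qed.
Lemma Bf0l z : Bf 0 z = 0.
Proof. by rewrite -(scale0r (0 : 'rV[Q]_d)) BfZl mul0r. Qed.
Lemma Bf0r z : Bf z 0 = 0.
Proof. by rewrite BfC Bf0l. Qed.

Lemma qfD x y : qf (x + y) = qf x + 2 * Bf x y + qf y.
Proof. rewrite /qf !BfDl !BfDr (BfC y x); ring. Qed.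
Lemma qfB x y : qf (x - y) = qf x - 2 * Bf x y + qf y.
Proof. rewrite /qf !BfBl !BfBr (BfC y x); ring. Qed.
Lemma qfZ c x : qf (c *: x) = c ^+ 2 * qf x.
Proof. rewrite /qf BfZl BfZr; ring. Qed.
Lemma qfN x : qf (- x) = qf x.
Proof. by rewrite /qf BfNl BfNr opprK. Qed.
Lemma qf0 : qf 0 = 0.
Proof. by rewrite /qf Bf0l. Qed.

Lemma sum_i0 (F : 'I_d -> Q) : \sum_(i < d | (i : nat) == 0%N) F i = F i0.
Proof.
apply: big_pred1 => i /=; apply/eqP/eqP => [h|->//].
by apply/val_inj; rewrite /= h.
Qed.

Lemma Bf_split x y : Bf x y = x 0 i0 * y 0 i0 - \sum_(i < d | (0 < (i:nat))%N) x 0 i * y 0 i.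
Proof.
rewrite /Bf (bigID (fun i : 'I_d => (i : nat) == 0%N)) /= sum_i0 /sg /= mul1r.
congr (_ + _); rewrite -sumrN; apply: eq_big => [i|i]; first by rewrite lt0n.
by move/negbTE => ->; rewrite mulN1r.
Qed.

Lemma qf_split x : qf x = x 0 i0 ^+ 2 - S2 x.
Proof. by rewrite /qf Bf_split /S2 expr2; congr (_ - _); apply: eq_bigr => i _; rewrite expr2. Qed.

Lemma S2_ge0 x : 0 <= S2 x.
Proof. by apply: sumr_ge0 => i _; apply: sqr_ge0. Qed.

Lemma S2_eq0 x : S2 x = 0 -> forall i : 'I_d, (0 < (i : nat))%N -> x 0 i = 0.
Proof.
move=> h i hi; apply/eqP; rewrite -sqrf_eq0; apply/eqP.
by apply: (psumr_eq0P _ h) => // j _; apply: sqr_ge0.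
Qed.

Lemma qf_time0 w : qf w = 0 -> w 0 i0 = 0 -> w = 0.
Proof.
move=> hq h0; have hS : S2 w = 0 by move: hq; rewrite qf_split h0 expr0n /= sub0r => /eqP; rewrite oppr_eq0 => /eqP.
apply/rowP => i; rewrite mxE; case: (posnP i) => [hi|hi]; last exact: S2_eq0.
by rewrite (_ : i = i0) //; apply: val_inj.
Qed.

Lemma null_time_neq0 n : qf n = 0 -> n != 0 -> n 0 i0 != 0.
Proof. by move=> hq hn; apply/eqP => h; move/eqP: hn; apply; apply: qf_time0. Qed.

Lemma null_orth u n : qf u = 0 -> qf n = 0 -> n != 0 -> Bf u n = 0 ->
  u = (u 0 i0 / n 0 i0) *: n.
Proof.
move=> hu hn nn huv; have n0 := null_time_neq0 hn nn.
apply/eqP; rewrite -subr_eq0; apply/eqP; apply: qf_time0.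
  by rewrite qfB qfZ BfZr huv hu hn; ring.
by rewrite !mxE divfK ?subrr.
Qed.


Ltac vec := apply/rowP => ?; rewrite !mxE; ring.

Lemma NlC x y : Nl x y <-> Nl y x.
Proof. by rewrite /Nl -opprB qfN. Qed.
Lemma Nl_refl x : Nl x x.
Proof. by rewrite /Nl subrr qf0. Qed.

Definition onL (x n z : 'rV[Q]_d) := exists t, z = x + t *: n.

Lemma Nl_line z x n t : qf n = 0 ->
  (Nl z (x + t *: n) <-> qf (z - x) - 2 * t * Bf (z - x) n = 0).
Proof.
move=> hn; rewrite /Nl (_ : z - (x + t *: n) = (z - x) - t *: n); last by vec.
by rewrite qfB qfZ BfZr hn mulr0 addr0 mulrA.
Qed.

Lemma lineChar x n z : qf n = 0 -> n != 0 ->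
  (onL x n z <-> forall u, Nl u x -> Nl u (x + n) -> Nl u z).
Proof.
move=> hn nn; split.
  move=> [t ->] u hux hun; rewrite Nl_line //.
  move: hun; rewrite /Nl (_ : u - (x + n) = (u - x) - n); last by vec.
  rewrite qfB hux hn => h.
  have hB : Bf (u - x) n = 0.
    by lra.
  rewrite hB; move: hux; rewrite /Nl; lra.
move=> h.
have hs : forall s, qf (z - x) - 2 * s * Bf (z - x) n = 0.
  move=> s; rewrite -Nl_line //; apply/NlC; apply: h.
    by rewrite /Nl (_ : x + s *: n - x = s *: n) ?qfZ ?hn ?mulr0 //; vec.
  by rewrite /Nl (_ : x + s *: n - (x + n) = (s - 1) *: n) ?qfZ ?hn ?mulr0 //; vec.
have h0 := hs 0; have h1 := hs 1.
rewrite mulr0 mul0r subr0 in h0.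
have hB : Bf (z - x) n = 0 by lra.
exists ((z - x) 0 i0 / n 0 i0); rewrite -(null_orth h0 hn nn hB); vec.
Qed.


Lemma two_neq0 : (2 : Q) != 0.
Proof. by rewrite pnatr_eq0. Qed.

Lemma hypChar x n z : qf n = 0 -> n != 0 ->
  (Bf (z - x) n = 0 <-> ~ exists w, [/\ onL x n w, Nl z w & forall w', onL x n w' -> Nl z w' -> w' = w]).
Proof.
move=> hn nn; split.
  move=> hB [w [[t ->] hzw hu]].
  have hq : qf (z - x) = 0 by move: hzw; rewrite Nl_line // hB; lra.
  have h2 : Nl z (x + (t+1) *: n) by rewrite Nl_line // hB hq; lra.
  have e := hu (x + (t+1) *: n) (ex_intro _ (t+1) erefl) h2.
  have : (1 : Q) *: n = 0.
    have -> : 1 *: n = (x + (t + 1) *: n) - (x + t *: n) by vec.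
    by rewrite e subrr.
  by rewrite scale1r => /eqP; rewrite (negbTE nn).
move=> hne; apply/eqP; apply/negPn/negP => hB; apply: hne.
have h2B : 2 * Bf (z - x) n != 0 by rewrite mulf_neq0 ?two_neq0.
exists (x + (qf (z - x) / (2 * Bf (z - x) n)) *: n); split.
- by exists (qf (z - x) / (2 * Bf (z - x) n)).
- by rewrite Nl_line //; field.
move=> w' [t' ->]; rewrite Nl_line // => h.
have -> : t' = qf (z - x) / (2 * Bf (z - x) n).
  by apply: (mulIf h2B); rewrite divfK //; lra.
by [].
Qed.




Ltac vecf := apply/rowP => ?; rewrite !mxE; field.

Definition ee (j : 'I_d) : 'rV[Q]_d := delta_mx 0 j.

Lemma Bf_e x j : Bf x (ee j) = sg j * x 0 j.
Proof.
rewrite /Bf (bigD1 j) //= big1 ?addr0 => [|i hij]; rewrite !mxE ?eqxx /=.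
  by rewrite mulr1.
by rewrite (negbTE hij) mulr0 mulr0.
Qed.

Lemma sg0 : sg i0 = 1. Proof. by rewrite /sg. Qed.
Lemma sgpos (j : 'I_d) : (0 < (j : nat))%N -> sg j = -1.
Proof. by rewrite /sg; case: (j : nat). Qed.

Lemma ee_i0 (j : 'I_d) : (0 < (j : nat))%N -> j != i0.
Proof. by move=> h; apply/eqP => e; move: h; rewrite e. Qed.

Lemma qf_pp (j : 'I_d) s : (0 < (j : nat))%N -> s ^+ 2 = 1 -> qf (ee i0 + s *: ee j) = 0.
Proof.
move=> hj hs; rewrite qfD qfZ /qf BfZr !Bf_e sg0 sgpos // !mxE /= !eqxx.
by rewrite (negbTE (ee_i0 hj)) hs /=; ring.
Qed.


Lemma Bf_pp a (j : 'I_d) s : (0 < (j : nat))%N -> Bf a (ee i0 + s *: ee j) = a 0 i0 - s * a 0 j.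
Proof. by move=> hj; rewrite BfDr BfZr !Bf_e sg0 sgpos //; ring. Qed.


Lemma S2_ge2 (x : 'rV[Q]_d) : x 0 i1 ^+ 2 + x 0 i2 ^+ 2 <= S2 x.
Proof.
rewrite /S2 (bigD1 i1) //= (bigD1 i2) /=; last by [].
rewrite addrA lerDl; apply: sumr_ge0 => i _; apply: sqr_ge0.
Qed.

Lemma i0_eq (j : 'I_d) : (j : nat) = 0%N -> j = i0.
Proof. by move=> h; apply: val_inj; rewrite /= h. Qed.

Lemma good_span a (P : 'rV[Q]_d -> Prop) : qf a = 0 -> a != 0 -> P 0 ->
  (forall y z, P y -> P z -> P (y + z)) ->
  (forall n t, qf n = 0 -> Bf a n != 0 -> P (t *: n)) -> forall y, P y.
Proof.
move=> ha na P0 PD PZ.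
have a0 := null_time_neq0 ha na.
have sq1 : (1 : Q) ^+ 2 = 1 by rewrite expr1n.
have sqm1 : (-1 : Q) ^+ 2 = 1 by rewrite sqrrN expr1n.
have [k [hk hp hm]] : exists k : 'I_d,
    [/\ (0 < (k:nat))%N, a 0 i0 - a 0 k != 0 & a 0 i0 + a 0 k != 0].
  case: (boolP ((a 0 i0 - a 0 i1 != 0) && (a 0 i0 + a 0 i1 != 0))) => [/andP[h1 h2]|h1].
    by exists i1.
  case: (boolP ((a 0 i0 - a 0 i2 != 0) && (a 0 i0 + a 0 i2 != 0))) => [/andP[h3 h4]|h2].
    by exists i2.
  have e1 : a 0 i1 ^+ 2 = a 0 i0 ^+ 2.
    move: h1; rewrite negb_and !negbK => /orP[] /eqP h.
      by have -> : a 0 i1 = a 0 i0 by lra.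
    have -> : a 0 i1 = - a 0 i0 by lra.
    by rewrite sqrrN.
  have e2 : a 0 i2 ^+ 2 = a 0 i0 ^+ 2.
    move: h2; rewrite negb_and !negbK => /orP[] /eqP h.
      by have -> : a 0 i2 = a 0 i0 by lra.
    have -> : a 0 i2 = - a 0 i0 by lra.
    by rewrite sqrrN.
  have := S2_ge2 a; rewrite e1 e2.
  have : S2 a = a 0 i0 ^+ 2 by move: ha; rewrite qf_split; lra.
  move=> ->; have := sqr_ge0 (a 0 i0) => hs hle.
  have : a 0 i0 ^+ 2 = 0 by lra.
  by move/eqP; rewrite sqrf_eq0 (negbTE a0).
have Pe0 t : P (t *: ee i0).
  have -> : t *: ee i0 = (t/2) *: (ee i0 + 1 *: ee k) + (t/2) *: (ee i0 + (-1) *: ee k) by vecf.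
  apply: (PD); apply: (PZ); rewrite ?qf_pp // Bf_pp //; [rewrite mul1r // | rewrite mulN1r opprK //].
have Pej (j : 'I_d) t : (0 < (j : nat))%N -> P (t *: ee j).
  move=> hj; case: (boolP (a 0 i0 - a 0 j != 0)) => hj'.
    have -> : t *: ee j = t *: (ee i0 + 1 *: ee j) +
       ((-t/2) *: (ee i0 + 1 *: ee k) + (-t/2) *: (ee i0 + (-1) *: ee k)) by vecf.
    apply: (PD); [|apply: (PD)]; apply: (PZ); rewrite ?qf_pp // Bf_pp //;
      by rewrite ?mul1r ?mulN1r ?opprK.
  have hj2 : a 0 i0 + a 0 j != 0.
    apply/eqP => h; move: hj'; rewrite negbK => /eqP h'.
    have : a 0 i0 = 0 by lra.
    by move/eqP; rewrite (negbTE a0).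
  have -> : t *: ee j = (-t) *: (ee i0 + (-1) *: ee j) +
     ((t/2) *: (ee i0 + 1 *: ee k) + (t/2) *: (ee i0 + (-1) *: ee k)) by vecf.
  apply: (PD); [|apply: (PD)]; apply: (PZ); rewrite ?qf_pp // Bf_pp //;
    by rewrite ?mul1r ?mulN1r ?opprK.
move=> y; rewrite (row_sum_delta y); apply: (big_ind P) => // j _.
case: (posnP j) => hj; last exact: Pej.
by rewrite (i0_eq hj); apply: Pe0.
Qed.

Section Map.
Variable f : 'rV[Q]_d -> 'rV[Q]_d.
Hypothesis fN : forall x y, Nl (f x) (f y) <-> Nl x y.
Hypothesis fsurj : forall y, exists x, f x = y.
Hypothesis finj : injective f.

Lemma f_null x n : qf n = 0 -> qf (f (x + n) - f x) = 0.
Proof.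
move=> hn; have : Nl (x + n) x by rewrite /Nl addrC addKr. 
by rewrite -fN.
Qed.

Lemma f_nz x n : n != 0 -> f (x + n) - f x != 0.
Proof.
move=> nn; rewrite subr_eq0; apply/eqP => /finj /eqP.
by rewrite -subr_eq0 addrC addKr (negbTE nn).
Qed.

Lemma lineT x n : qf n = 0 -> n != 0 -> forall z,
  onL x n z <-> onL (f x) (f (x + n) - f x) (f z).
Proof.
move=> hn nn z.
have e : f x + (f (x + n) - f x) = f (x + n) by rewrite addrC subrK.
rewrite (lineChar _ _ hn nn) (lineChar _ _ (@f_null x n hn) (@f_nz x n nn)) e; split.
  move=> h u' hx hxn; have [u eu] := fsurj u'; subst u'.
  by rewrite fN; apply: h; rewrite -fN.
by move=> h u hx hxn; rewrite -fN; apply: h; rewrite fN.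
Qed.

Lemma hypT x n : qf n = 0 -> n != 0 -> forall z,
  Bf (z - x) n = 0 <-> Bf (f z - f x) (f (x + n) - f x) = 0.
Proof.
move=> hn nn z.
rewrite (@hypChar x n z hn nn) (@hypChar (f x) _ (f z) (@f_null x n hn) (@f_nz x n nn)).
have lT := @lineT x n hn nn.
split=> hne [w [hw hzw hu]]; apply: hne.
  have [v ev] := fsurj w; subst w.
  exists v; split; [by rewrite lT | by rewrite -fN |].
  by move=> w' hw' hzw'; apply: finj; apply: hu; [rewrite -lT | rewrite fN].
exists (f w); split; [by rewrite -lT | by rewrite fN |].
move=> w' hw' hzw'; have [v ev] := fsurj w'; subst w'.
by congr f; apply: hu; [rewrite lT | rewrite -fN].
Qed.


Lemma parC x a b : qf a = 0 -> qf b = 0 -> Bf a b != 0 ->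
  f (x + a + b) = f (x + a) + f (x + b) - f x.
Proof.
move=> ha hb hab.
have nb : b != 0 by apply: contraNneq hab => ->; rewrite Bf0r.
have na : a != 0 by apply: contraNneq hab => ->; rewrite Bf0l.
have qB1 : qf (f (x + b) - f x) = 0 := @f_null x b hb.
have qB2 : qf (f (x + a + b) - f (x + a)) = 0 := @f_null (x + a) b hb.
have nB1 : f (x + b) - f x != 0 := @f_nz x b nb.
have qA : qf (f (x + a) - f x) = 0 := @f_null x a ha.
have hB : Bf (f (x + a + b) - f (x + a)) (f (x + b) - f x) = 0.
  apply/eqP/negPn/negP => hne.
  pose al := - Bf (f x - f (x + a)) (f (x + a + b) - f (x + a)) /
              Bf (f (x + b) - f x) (f (x + a + b) - f (x + a)).
  have [z ez] := fsurj (f x + al *: (f (x + b) - f x)).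
  have h1 : Bf (z - x) b = 0.
    rewrite (@hypT x b hb nb) ez.
    rewrite (_ : f x + al *: (f (x + b) - f x) - f x = al *: (f (x + b) - f x)); last by vec.
    by rewrite BfZl (qB1 : Bf (f (x + b) - f x) (f (x + b) - f x) = 0) mulr0.
  have h2 : Bf (z - (x + a)) b = 0.
    rewrite (@hypT (x + a) b hb nb) ez.
    rewrite (_ : f x + al *: (f (x + b) - f x) - f (x + a) =
                 (f x - f (x + a)) + al *: (f (x + b) - f x)); last by vec.
    rewrite BfDl BfZl /al; rewrite BfC in hne; field; exact: hne.
  have : Bf a b = 0.
    have -> : a = (z - x) - (z - (x + a)) by vec.
    by rewrite BfBl h1 h2 subrr.
  by move/eqP; rewrite (negbTE hab).
have eB2 := null_orth qB2 qB1 nB1 hB.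
move: eB2; set ka := (_ / _) => eB2.
have eF : f (x + a + b) = f (x + a) + ka *: (f (x + b) - f x).
  by rewrite -eB2; vec.
have hN : Nl (f (x + a + b)) (f (x + b)).
  by rewrite fN /Nl (_ : x + a + b - (x + b) = a) //; vec.
have hAB : Bf (f (x + a) - f x) (f (x + b) - f x) != 0.
  apply/eqP => e.
  have : Nl (f (x + a)) (f (x + b)).
    rewrite /Nl (_ : f (x + a) - f (x + b) = (f (x + a) - f x) - (f (x + b) - f x)); last by vec.
    by rewrite qfB qA qB1 e; ring.
  rewrite fN /Nl (_ : x + a - (x + b) = a - b); last by vec.
  rewrite qfB ha hb => e2; move/eqP: hab; apply; lra.
have hk : ka = 1.
  move: hN; rewrite /Nl eF.
  rewrite (_ : f (x + a) + ka *: (f (x + b) - f x) - f (x + b) =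
              (f (x + a) - f x) + (ka - 1) *: (f (x + b) - f x)); last by vec.
  rewrite qfD qfZ BfZr qA qB1 => e.
  apply/eqP; rewrite -subr_eq0; apply/eqP.
  apply: (mulIf hAB); rewrite mul0r; apply: (mulIf two_neq0); rewrite mul0r -e; ring.
by rewrite eF hk scale1r addrA.
Qed.

Lemma transl_null a : qf a = 0 -> forall x, f (x + a) - f x = f a - f 0.
Proof.
move=> ha; case: (eqVneq a 0) => [->|na] x; first by rewrite !addr0 !subrr.
pose P y := forall x, f (x + y + a) - f (x + y) = f (x + a) - f x.
have HP : forall y, P y.
  apply: (@good_span a) => //.
  - by move=> z; rewrite addr0.
  - move=> y1 y2 h1 h2 z; rewrite addrA h2 h1 //.
  move=> n t hn hna z; case: (eqVneq t 0) => [->|nt]; first by rewrite scale0r addr0.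
  have hn' : qf (t *: n) = 0 by rewrite qfZ hn mulr0.
  have hna' : Bf a (t *: n) != 0 by rewrite BfZr mulf_neq0.
  rewrite (_ : z + t *: n + a = z + a + t *: n); last by vec.
  rewrite (@parC z a (t *: n) ha hn' hna'); vec.
by move: (HP x 0); rewrite !add0r.
Qed.


Lemma a0_null : qf (ee i0 + 1 *: ee i1) = 0.
Proof. by apply: qf_pp => //; rewrite expr1n. Qed.

Lemma ee_entry (j k : 'I_d) : ee j 0 k = (k == j)%:R.
Proof. by rewrite !mxE eqxx. Qed.

Lemma i1_neq0 : i1 != i0. Proof. by []. Qed.
Lemma i2_neq0 : i2 != i0. Proof. by []. Qed.
Lemma i2_neq1 : i2 != i1. Proof. by []. Qed.
Lemma e01 : (i0 == i1) = false. Proof. by []. Qed.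
Lemma e10 : (i1 == i0) = false. Proof. by []. Qed.
Lemma e02 : (i0 == i2) = false. Proof. by []. Qed.
Lemma e20 : (i2 == i0) = false. Proof. by []. Qed.
Lemma e12 : (i1 == i2) = false. Proof. by []. Qed.
Lemma e21 : (i2 == i1) = false. Proof. by []. Qed.

Lemma a0_nz : ee i0 + 1 *: ee i1 != 0.
Proof.
apply/eqP => /rowP /(_ i0); rewrite !mxE eqxx /= => h.
by move: h; rewrite ?e01 ?e10 /= mulr0 addr0 => /eqP; rewrite oner_eq0.
Qed.

Lemma f_addD x y : f (x + y) - f x = f y - f 0.
Proof.
pose P y := forall x, f (x + y) - f x = f y - f 0.
suff H : forall y, P y by apply: H.
apply: (@good_span _ P a0_null a0_nz).
- by move=> z; rewrite addr0 !subrr.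
- move=> y1 y2 h1 h2 z; rewrite addrA.
  rewrite (_ : f (z + y1 + y2) - f z = (f (z + y1 + y2) - f (z + y1)) + (f (z + y1) - f z)); last by vec.
  rewrite h2 h1.
  rewrite (_ : f (y1 + y2) - f 0 = (f (y1 + y2) - f y1) + (f y1 - f 0)); last by vec.
  by rewrite h2.
move=> n t hn _ z; apply: transl_null; by rewrite qfZ hn mulr0.
Qed.

End Map.

Lemma orth2 (a b : 'rV[Q]_d) : exists e, [/\ e != 0, Bf e a = 0 & Bf e b = 0].
Proof.
pose M : 'M[Q]_(d, 2) := \matrix_(i, j) (sg i * (if (j : nat) == 0%N then a 0 i else b 0 i)).
have hM : forall e : 'rV[Q]_d, Bf e a = (e *m M) 0 0 /\ Bf e b = (e *m M) 0 ord_max.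
  move=> e; split; rewrite !mxE; apply: eq_bigr => i _; rewrite mxE /=; ring.
have hr : (0 < \rank (kermx M))%N.
  rewrite mxrank_ker; have := rank_leq_col M; move: hd; clear; move=> hd h.
  by rewrite subn_gt0; apply: leq_ltn_trans h hd.
have hK : kermx M != 0 by rewrite -mxrank_eq0 -lt0n.
have [i hi] : exists i, row i (kermx M) != 0.
  case: (pickP (fun i => row i (kermx M) != 0)) => [i hi|h]; first by exists i.
  case/negP: hK; apply/eqP/row_matrixP => i; rewrite row0.
  by move: (h i) => /= /negbFE /eqP.
exists (row i (kermx M)); have [h1 h2] := hM (row i (kermx M)).
by rewrite h1 h2 -row_mul mulmx_ker row0 !mxE.
Qed.


Lemma qf3 x y z : qf (x + y + z) = qf x + qf y + qf z + 2 * (Bf x y + Bf x z + Bf y z).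
Proof. rewrite !qfD BfDl; ring. Qed.

Lemma lin_zero (L : 'rV[Q]_d -> Q) : (forall x y, L (x + y) = L x + L y) ->
  (forall t x, L (t *: x) = t * L x) -> (forall n, qf n = 0 -> L n = 0) -> forall x, L x = 0.
Proof.
move=> LD LZ Ln; apply: (@good_span _ (fun x => L x = 0) a0_null a0_nz).
- by rewrite -(scale0r (0 : 'rV[Q]_d)) LZ mul0r.
- by move=> y z hy hz; rewrite LD hy hz addr0.
by move=> n t hn _; rewrite LZ Ln ?mulr0.
Qed.

Section Lin.
Variable g : 'rV[Q]_d -> 'rV[Q]_d.
Hypothesis gN : forall x y, Nl (g x) (g y) <-> Nl x y.
Hypothesis gsurj : forall y, exists x, g x = y.
Hypothesis ginj : injective g.
Hypothesis gadd : forall x y, g (x + y) = g x + g y.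

Lemma g0 : g 0 = 0.
Proof.
have h := gadd 0 0; rewrite addr0 in h.
by have := congr1 (fun v => v - g 0) h; rewrite subrr addrK.
Qed.

Lemma gB x y : g (x - y) = g x - g y.
Proof.
have h := gadd (x - y) y; rewrite subrK in h.
by rewrite h addrK.
Qed.

Lemma g_nullP y : qf (g y) = 0 <-> qf y = 0.
Proof. by have := gN y 0; rewrite /Nl g0 !subr0. Qed.

Lemma g_line a : qf a = 0 -> a != 0 -> forall z, onL 0 a z <-> onL 0 (g a) (g z).
Proof.
move=> ha na z; rewrite (@lineT g gN gsurj ginj 0 a ha na z).
by rewrite g0 add0r subr0.
Qed.

Lemma g_scal a t : qf a = 0 -> a != 0 -> exists k, g (t *: a) = k *: g a.
Proof.
move=> ha na; have : onL 0 (g a) (g (t *: a)).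
  by rewrite -g_line //; exists t; rewrite add0r.
by case=> k ->; exists k; rewrite add0r.
Qed.

Lemma gBnz a b : qf a = 0 -> qf b = 0 -> Bf a b != 0 -> Bf (g a) (g b) != 0.
Proof.
move=> ha hb hab; apply/eqP => e.
have : Nl (g a) (g b) by rewrite /Nl qfB e (proj2 (g_nullP a) ha) (proj2 (g_nullP b) hb); ring.
rewrite gN /Nl qfB ha hb => h; move/eqP: hab; apply; lra.
Qed.

Lemma indep A B C x y z : qf A = 0 -> qf B = 0 -> qf C = 0 ->
  Bf A B != 0 -> Bf A C != 0 -> Bf B C != 0 ->
  x *: A + y *: B + z *: C = 0 -> x = 0 /\ y = 0.
Proof.
move=> hA hB hC hAB hAC hBC h.
have e1 := congr1 (Bf ^~ A) h; have e2 := congr1 (Bf ^~ B) h; have e3 := congr1 (Bf ^~ C) h.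
move: e1 e2 e3; rewrite /= !BfDl !BfZl !Bf0l.
rewrite (hA : Bf A A = 0) (hB : Bf B B = 0) (hC : Bf C C = 0) (BfC B A) (BfC C A) (BfC C B) => e1 e2 e3.
have hz : z = 0.
  have : z * (2 * Bf A C * Bf B C) = 0.
    have -> : z * (2 * Bf A C * Bf B C) =
      Bf A C * (x * Bf A B + y * 0 + z * Bf B C) + Bf B C * (x * 0 + y * Bf A B + z * Bf A C)
      - Bf A B * (x * Bf A C + y * Bf B C + z * 0) by ring.
    by rewrite e1 e2 e3; ring.
  by move/eqP; rewrite !mulf_eq0 (negbTE hAC) (negbTE hBC) (negbTE two_neq0) !orbF => /eqP.
subst z; move: e1 e2; rewrite !mul0r !addr0 !mulr0 add0r addr0 => /eqP e1 /eqP e2.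
move: e1 e2; rewrite !mulf_eq0 (negbTE hAB) !orbF => /eqP -> /eqP ->; by [].
Qed.


Lemma kappa_eq a b t k k' : qf a = 0 -> qf b = 0 -> Bf a b != 0 ->
  g (t *: a) = k *: g a -> g (t *: b) = k' *: g b -> k = k'.
Proof.
move=> ha hb hab hk hk'.
have nb : b != 0 by apply: contraNneq hab => ->; rewrite Bf0r.
have na : a != 0 by apply: contraNneq hab => ->; rewrite Bf0l.
have [e [ne ea eb]] := orth2 a b.
have qe : qf e != 0.
  apply/eqP => qe0; have := null_orth qe0 ha na ea; set c := (_ / _) => ec.
  have : Bf e b = c * Bf a b by rewrite {1}ec BfZl.
  rewrite eb => /esym/eqP; rewrite mulf_eq0 (negbTE hab) orbF => /eqP c0.
  by move: ne; rewrite ec c0 scale0r eqxx.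
pose r := qf e / Bf a b.
have [al [nal hal]] : exists al : Q, al != 0 /\ al - r / (2 * al) != 0.
  case: (eqVneq r 2) => hr; [exists 2 | exists 1]; split; rewrite ?two_neq0 ?oner_eq0 //.
    rewrite hr (_ : (2:Q) - 2 / (2 * 2) = 3 / 2); last by field.
    by rewrite mulf_neq0 ?invr_eq0 ?pnatr_eq0.
  apply: contraNneq hr => h.
  have -> : r = 2 - 2 * (1 - r / (2 * 1)) by field.
  by rewrite h mulr0 subr0.
pose be := - qf e / (2 * al * Bf a b).
have hbe : be != 0 by rewrite /be mulf_neq0 ?oppr_eq0 // invr_eq0 !mulf_neq0 ?two_neq0.
pose u := al *: a + be *: b + e.
have qu : qf u = 0.
  rewrite /u qf3 !qfZ ha hb !BfZl !BfZr (BfC a e) (BfC b e) ea eb /be; field.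
  by rewrite nal hab.
have Buv : Bf u (a + b) = (al - r / (2 * al)) * Bf a b.
  rewrite /u !BfDl !BfDr !BfZl ea eb (BfC b a).
  rewrite (ha : Bf a a = 0) (hb : Bf b b = 0) /be /r; field.
  by rewrite nal hab.
have nBuv : Bf u (a + b) != 0 by rewrite Buv mulf_neq0.
have qv : qf (a + b) = 2 * Bf a b by rewrite qfD ha hb; ring.
pose s := qf (a + b) / (2 * Bf u (a + b)).
have ns : s != 0 by rewrite /s qv mulf_neq0 ?invr_eq0 ?mulf_neq0 ?two_neq0.
pose c := s *: u.
have qc : qf c = 0 by rewrite qfZ qu mulr0.
have qc' : qf (a + b - c) = 0.
  rewrite qfB qc BfZr (BfC _ u) /s; field; by rewrite nBuv.
have Bac : Bf a c != 0.
  rewrite BfZr /u !BfDr !BfZr (BfC a e) ea (ha : Bf a a = 0).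
  by rewrite mulr0 add0r addr0 mulf_neq0 // mulf_neq0.
have Bbc : Bf b c != 0.
  rewrite BfZr /u !BfDr !BfZr (BfC b e) eb (hb : Bf b b = 0) (BfC b a).
  by rewrite mulr0 addr0 addr0 mulf_neq0 // mulf_neq0.
have nc : c != 0 by apply: contraNneq Bac => ->; rewrite Bf0r.
have nc' : a + b - c != 0.
  apply/eqP => h; have : a + b = c by apply/eqP; rewrite -subr_eq0 h.
  move=> e'; move: qv; rewrite e' qc => /esym/eqP; rewrite mulf_eq0 (negbTE two_neq0) (negbTE hab) //.
have [kc hkc] := g_scal t qc nc.
have [kc' hkc'] := g_scal t qc' nc'.
have gc' : g (a + b - c) = g a + g b - g c by rewrite gB gadd.
have E : k *: g a + k' *: g b = kc *: g c + kc' *: (g a + g b - g c).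
  rewrite -hk -hk' -hkc -gc' -hkc' -!gadd; congr g; vec.
have E2 : (k - kc') *: g a + (k' - kc') *: g b + (kc' - kc) *: g c = 0.
  have -> : (k - kc') *: g a + (k' - kc') *: g b + (kc' - kc) *: g c =
    (k *: g a + k' *: g b) - (kc *: g c + kc' *: (g a + g b - g c)) by vec.
  by rewrite E subrr.
have [h1 h2] := indep (proj2 (g_nullP a) ha) (proj2 (g_nullP b) hb) (proj2 (g_nullP c) qc)
  (gBnz ha hb hab) (gBnz ha qc Bac) (gBnz hb qc Bbc) E2.
lra.
Qed.


Definition a0v := ee i0 + 1 *: ee i1.
Definition b0v := ee i0 + (-1) *: ee i1.

Lemma b0_null : qf b0v = 0.
Proof. by apply: qf_pp => //; rewrite sqrrN expr1n. Qed.

Lemma a0b0 : Bf a0v b0v != 0.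
Proof.
rewrite /b0v Bf_pp // /a0v !mxE !eqxx e01 /=.
rewrite (_ : (1 : Q) * false%:R = 0); last by rewrite mulr0.
by rewrite addr0 mulr1 add0r mulN1r opprK (_ : (1 : Q) + 1 = 2) // two_neq0.
Qed.

Lemma b0_nz : b0v != 0.
Proof. by apply: contraNneq a0b0 => ->; rewrite Bf0r. Qed.

Lemma scal_cancel (k1 k2 : Q) (w : 'rV[Q]_d) : k1 *: w = k2 *: w -> w != 0 -> k1 = k2.
Proof.
move=> h nw; have : (k1 - k2) *: w = 0 by rewrite scalerBl h subrr.
by move/eqP; rewrite scaler_eq0 (negbTE nw) orbF subr_eq0 => /eqP.
Qed.

Lemma g_nz v : v != 0 -> g v != 0.
Proof. move=> nv; apply/eqP => h; move/eqP: nv; apply; apply: ginj; by rewrite h g0. Qed.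

Definition mu t := (g (t *: a0v)) 0 i0 / (g a0v) 0 i0.

Lemma ga0 : (g a0v) 0 i0 != 0.
Proof. by apply: null_time_neq0; [apply/g_nullP; apply: a0_null | apply: g_nz; apply: a0_nz]. Qed.

Lemma g_mu_a0 t : g (t *: a0v) = mu t *: g a0v.
Proof.
have [k hk] := g_scal t a0_null a0_nz.
by rewrite hk /mu hk mxE mulfK // ga0.
Qed.

Lemma g_mu_null n t : qf n = 0 -> g (t *: n) = mu t *: g n.
Proof.
move=> hn; case: (eqVneq n 0) => [->|nn]; first by rewrite scaler0 g0 scaler0.
have [k hk] := g_scal t hn nn; rewrite hk; congr (_ *: _).
case: (eqVneq (Bf n a0v) 0) => h; last by apply: (kappa_eq hn a0_null h hk (g_mu_a0 t)).
have en := null_orth hn a0_null a0_nz h; move: en; set c := (_ / _) => en.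
have nc : c != 0 by apply: contraNneq nn => c0; rewrite en c0 scale0r.
have hnb : Bf n b0v != 0 by rewrite en BfZl mulf_neq0 // a0b0.
have [kb hkb] := g_scal t b0_null b0_nz.
by rewrite (kappa_eq hn b0_null hnb hk hkb) (kappa_eq a0_null b0_null a0b0 (g_mu_a0 t) hkb).
Qed.

Lemma g_mu v t : g (t *: v) = mu t *: g v.
Proof.
pose P v := g (t *: v) = mu t *: g v.
apply: (@good_span _ P a0_null a0_nz) => {v}.
- by rewrite /P scaler0 g0 scaler0.
- by move=> y z; rewrite /P !scalerDr !gadd scalerDr => -> ->.
move=> n s hn _; rewrite /P; apply: g_mu_null; by rewrite qfZ hn mulr0.
Qed.

Lemma muD t s : mu (t + s) = mu t + mu s.
Proof.
have h := g_mu_a0 (t + s); rewrite scalerDl gadd !g_mu_a0 -scalerDl in h.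
by apply: scal_cancel (esym h) (g_nz a0_nz).
Qed.

Lemma mu1 : mu 1 = 1.
Proof.
have h := g_mu_a0 1; rewrite scale1r -{1}(scale1r (g a0v)) in h.
by apply: scal_cancel (esym h) (g_nz a0_nz).
Qed.

Lemma mu_surj kk : exists t, mu t = kk.
Proof.
have [z hz] := gsurj (kk *: g a0v).
have : onL 0 (g a0v) (g z) by rewrite hz; exists kk; rewrite add0r.
rewrite -g_line ?a0_null ?a0_nz // => -[t]; rewrite add0r => ez.
exists t; apply: scal_cancel (g_nz a0_nz).
by rewrite -g_mu_a0 -ez hz.
Qed.

Hypothesis gSym : forall x : 'rV[Q]_d, x 0 i0 = 0 -> (g x) 0 i0 = 0 -> qf (g x) = qf x.

Lemma exists_v : exists v : 'rV[Q]_d, [/\ v != 0, v 0 i0 = 0 & (g v) 0 i0 = 0].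
Proof.
case: (eqVneq ((g (ee i1)) 0 i0) 0) => h.
  exists (ee i1); split => //; last by rewrite !mxE e01.
  apply/eqP => /rowP /(_ i1); rewrite !mxE !eqxx /= => /eqP; by rewrite oner_eq0.
have [s hs] := mu_surj (- (g (ee i2)) 0 i0 / (g (ee i1)) 0 i0).
exists (s *: ee i1 + ee i2); split.
- apply/eqP => /rowP /(_ i2); rewrite !mxE !eqxx e21 /= mulr0 add0r => /eqP; by rewrite oner_eq0.
- by rewrite !mxE e01 e02 /= mulr0 addr0.
by rewrite gadd g_mu !mxE hs; field.
Qed.

Lemma mu_id t : mu t = t.
Proof.
have [v [nv v0 gv0]] := exists_v.
have qv : qf v != 0 by apply/eqP => h; move/eqP: nv; apply; exact: qf_time0 h v0.
have hs : forall s, mu s ^+ 2 = s ^+ 2.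
  move=> s; have e1 := gSym v0 gv0.
  have e2 : qf (g (s *: v)) = qf (s *: v).
    by apply: gSym; rewrite ?g_mu !mxE ?v0 ?gv0 mulr0.
  move: e2; rewrite g_mu !qfZ e1 => /eqP.
  by rewrite -subr_eq0 -mulrBl mulf_eq0 (negbTE qv) orbF subr_eq0 => /eqP.
have h1 := hs (t + 1); rewrite muD mu1 !sqrrD expr1n hs in h1.
lra.
Qed.

Lemma g_lin v t : g (t *: v) = t *: g v.
Proof. by rewrite g_mu mu_id. Qed.


Lemma I_id x a : qf a = 0 -> qf (g x) * Bf x a = qf x * Bf (g x) (g a).
Proof.
move=> ha; have hga : qf (g a) = 0 := proj2 (g_nullP a) ha.
have key : forall t, qf (x + t *: a) = 0 <-> qf (g x + t *: g a) = 0.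
  by move=> t; rewrite -g_lin -gadd g_nullP.
have ex1 : forall t, qf (x + t *: a) = qf x + 2 * t * Bf x a.
  by move=> t; rewrite qfD qfZ ha BfZr; ring.
have ex2 : forall t, qf (g x + t *: g a) = qf (g x) + 2 * t * Bf (g x) (g a).
  by move=> t; rewrite qfD qfZ hga BfZr; ring.
case: (eqVneq (Bf x a) 0) => hB.
  rewrite hB mulr0; case: (eqVneq (qf x) 0) => hq; first by rewrite hq mul0r.
  case: (eqVneq (Bf (g x) (g a)) 0) => hB'; first by rewrite hB' mulr0.
  exfalso; pose t1 := - qf (g x) / (2 * Bf (g x) (g a)).
  have : qf (g x + t1 *: g a) = 0 by rewrite ex2 /t1; field; exact: hB'.
  by rewrite -key ex1 hB mulr0 addr0 => /eqP; rewrite (negbTE hq).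
pose t0 := - qf x / (2 * Bf x a).
have : qf (x + t0 *: a) = 0 by rewrite ex1 /t0; field; exact: hB.
rewrite key ex2 /t0 => h.
have E : qf (g x) * Bf x a - qf x * Bf (g x) (g a) =
   (qf (g x) + 2 * (- qf x / (2 * Bf x a)) * Bf (g x) (g a)) * Bf x a by field; exact: hB.
by apply/eqP; rewrite -subr_eq0 E h mul0r.
Qed.

Lemma g_qf y : qf (g y) = qf y.
Proof.
have [v [nv v0 gv0]] := exists_v.
have qv : qf v != 0 by apply/eqP => h; move/eqP: nv; apply; exact: qf_time0 h v0.
have qgv := gSym v0 gv0.
have BgV : forall y, Bf (g v) (g y) = Bf v y.
  move=> z; apply/eqP; rewrite -subr_eq0; apply/eqP; move: z.
  apply: (@lin_zero (fun z => Bf (g v) (g z) - Bf v z)).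
  - by move=> z1 z2; rewrite gadd !BfDr; ring.
  - by move=> t z; rewrite g_lin !BfZr; ring.
  move=> n hn; have := I_id v hn; rewrite qgv => /eqP.
  by rewrite -subr_eq0 -mulrBr mulf_eq0 (negbTE qv) /= subr_eq0 => /eqP ->; rewrite subrr.
have BgA : forall z a, qf a = 0 -> Bf (g z) (g a) = Bf z a.
  move=> z a ha.
  have hs : forall s, (qf v + 2 * (s * Bf v z) + s ^+ 2 * qf (g z)) * (Bf v a + s * Bf z a) =
                      (qf v + 2 * (s * Bf v z) + s ^+ 2 * qf z) * (Bf v a + s * Bf (g z) (g a)).
    move=> s; have := I_id (v + s *: z) ha.
    rewrite gadd g_lin !qfD !qfZ !BfDl !BfZl !BfZr qgv (BgV z) (BgV a).
    by [].
  have h1 := hs 1; have h2 := hs (-1); have h3 := hs 2.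
  have E : 6 * (qf v * (Bf z a - Bf (g z) (g a))) = 0.
    move: h1 h2 h3; set A := qf v; set G := Bf v z; set Y' := qf (g z); set Y := qf z;
      set b0 := Bf v a; set b1 := Bf z a; set b1' := Bf (g z) (g a) => h1 h2 h3.
    have -> : 6 * (A * (b1 - b1')) =
      6 * ((A + 2 * (1 * G) + 1 ^+ 2 * Y') * (b0 + 1 * b1) - (A + 2 * (1 * G) + 1 ^+ 2 * Y) * (b0 + 1 * b1'))
      - 2 * ((A + 2 * (-1 * G) + (-1) ^+ 2 * Y') * (b0 + -1 * b1) - (A + 2 * (-1 * G) + (-1) ^+ 2 * Y) * (b0 + -1 * b1'))
      - ((A + 2 * (2 * G) + 2 ^+ 2 * Y') * (b0 + 2 * b1) - (A + 2 * (2 * G) + 2 ^+ 2 * Y) * (b0 + 2 * b1')) by ring.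
    by rewrite h1 h2 h3 !subrr; ring.
  by move/eqP: E; rewrite !mulf_eq0 (negbTE qv) pnatr_eq0 /= subr_eq0 => /eqP.
have BB : forall z, Bf (g y) (g z) = Bf y z.
  move=> z; apply/eqP; rewrite -subr_eq0; apply/eqP; move: z.
  apply: (@lin_zero (fun z => Bf (g y) (g z) - Bf y z)).
  - by move=> z1 z2; rewrite gadd !BfDr; ring.
  - by move=> t z; rewrite g_lin !BfZr; ring.
  by move=> n hn; rewrite BgA // subrr.
exact: BB.
Qed.

End Lin.

Lemma time_eq (x y : 'rV[Q]_d) : time x y = (x - y) 0 i0.
Proof. by rewrite /time sum_i0 !mxE. Qed.

Lemma space2_eq (x y : 'rV[Q]_d) : space2 x y = S2 (x - y).
Proof. by rewrite /space2 /S2; apply: eq_bigr => i _; rewrite !mxE. Qed.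

Lemma interval (x y : 'rV[Q]_d) : time x y ^+ 2 - space2 x y = qf (x - y).
Proof. by rewrite qf_split time_eq space2_eq. Qed.

Theorem geo_main (f : 'rV[Q]_d -> 'rV[Q]_d) :
  (forall x y, Nl (f x) (f y) <-> Nl x y) ->
  (forall y, exists x, f x = y) -> injective f ->
  (forall x y, time x y = 0 -> time (f x) (f y) = 0 -> space2 x y = space2 (f x) (f y)) ->
  poincare f.
Proof.
move=> fN fsurj finj fSym.
pose g x := f x - f 0.
have gB : forall x y, g x - g y = f x - f y by move=> x y; rewrite /g; vec.
have gN : forall x y, Nl (g x) (g y) <-> Nl x y by move=> x y; rewrite /Nl gB; apply: fN.
have gsurj : forall y, exists x, g x = y.
  by move=> y; have [x hx] := fsurj (y + f 0); exists x; rewrite /g hx addrK.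
have ginj : injective g by move=> x y; rewrite /g => /(congr1 (fun v => v + f 0)); rewrite !subrK; apply: finj.
have gadd : forall x y, g (x + y) = g x + g y.
  move=> x y; have := @f_addD f fN fsurj finj x y; rewrite /g => h.
  rewrite (_ : f (x + y) - f 0 = (f (x + y) - f x) + (f x - f 0)); last by vec.
  by rewrite h addrC.
have gSym : forall x : 'rV[Q]_d, x 0 i0 = 0 -> (g x) 0 i0 = 0 -> qf (g x) = qf x.
  move=> x h1 h2.
  have t1 : time x 0 = 0 by rewrite time_eq subr0.
  have t2 : time (f x) (f 0) = 0 by rewrite time_eq.
  have := fSym _ _ t1 t2.
  have j1 := interval x 0; have j2 := interval (f x) (f 0).
  rewrite t1 in j1; rewrite t2 in j2; rewrite subr0 in j1.
  rewrite /g; lra.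
have glin := @g_lin g gN gsurj ginj gadd gSym.
have gq := @g_qf g gN gsurj ginj gadd gSym.
have g0' : g 0 = 0 by rewrite /g subrr.
pose A : 'M[Q]_d := \matrix_(i, j) (g (ee i)) 0 j.
have gA : forall x, g x = x *m A.
  move=> x; rewrite {1}(row_sum_delta x).
  rewrite (big_morph g gadd g0').
  apply/rowP => j; rewrite summxE mxE; apply: eq_bigr => i _.
  by rewrite glin !mxE.
have fA : forall x, f x = x *m A + f 0 by move=> x; rewrite -gA /g subrK.
split.
- by exists A, (f 0).
- have hinv : forall y, {x | f x = y}.
    by move=> y; apply: constructive_indefinite_description; apply: fsurj.
  exists (fun y => sval (hinv y)).
    by move=> x; apply: finj; rewrite (svalP (hinv (f x))).
  by move=> y; rewrite (svalP (hinv y)).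
move=> x y; rewrite !interval -gB.
have -> : g x - g y = g (x - y) by have := gadd (x - y) y; rewrite subrK => ->; rewrite addrK.
by rewrite gq.
Qed.


Section SRpart.
Variables (B : Type) (IOb : B -> Prop) (Ph : B -> B -> Prop) (W : B -> B -> 'rV[Q]_d -> Prop).

Definition photon (h : B) (x y : 'rV[Q]_d) := exists p b, [/\ Ph p b, W h p x & W h p y].

Definition posl : seq nat := map (fun i : 'I_d => (i : nat)) (filter (fun i : 'I_d => (0 < (i : nat))%N) (enum 'I_d)).
Definition Lt : qterm := foldr (fun j t => QAdd (QAdd (QMul (QV j) (QV j)) (QMul (QV (d + j)) (QV (d + j)))) t)
  (QAdd (QMul (QV 0) (QV d)) (QMul (QV 0) (QV d))) posl.
Definition Rt : qterm := foldr (fun j t => QAdd (QAdd (QMul (QV j) (QV (d + j))) (QMul (QV j) (QV (d + j)))) t)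
  (QAdd (QMul (QV 0) (QV 0)) (QMul (QV d) (QV d))) posl.
Definition Wx : Defs.form d := FW 0 1 (fun i => QV i).
Definition Wy : Defs.form d := FW 0 1 (fun i => QV (d + i)).
Definition PHf : Defs.form d := FExB 1 (FExB 2 (FAnd (FPh d 1 2) (FAnd Wx Wy))).
Definition EQf : Defs.form d := FEqQ d Lt Rt.
Definition phi0 : Defs.form d := FAnd (FImp PHf EQf) (FImp EQf PHf).
Definition phiL : Defs.form d := foldr (fun n a => FAllQ n a) phi0 (iota 0 (d + d)).

Lemma fvB_phiL : all (fun j => j == 0%N) (fvB phiL).
Proof.
have H : forall l (psi : Defs.form d), fvB (foldr (fun n a => FAllQ n a) psi l) = fvB psi.
  by elim=> //= n l ->.
by rewrite /phiL H.
Qed.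

Lemma holds_foldQ eB (eQ : nat -> Q) l (psi : Defs.form d) :
  holds IOb Ph W eB eQ (foldr (fun n a => FAllQ n a) psi l) <->
  forall e', (forall j, j \notin l -> e' j = eQ j) -> holds IOb Ph W eB e' psi.
Proof.
elim: l eQ => [|n l IH] eQ /=.
  split; [by move=> h e' he; rewrite (_ : e' = eQ) //; apply: functional_extensionality => j; apply: he|].
  by move=> h; apply: h.
split.
  move=> h e' he; have := h (e' n); rewrite IH; apply => j hj.
  rewrite /upd; case: eqP => [->//|/eqP hjn]; apply: he.
  by rewrite in_cons negb_or hjn hj.
move=> h q; rewrite IH => e' he; apply: h => j hj.
move: hj; rewrite in_cons negb_or => /andP[hjn hjl].
by rewrite he // /upd (negbTE hjn).
Qed.

Lemma qeval_foldr (e : nat -> Q) (F : nat -> qterm) b l :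
  qeval e (foldr (fun j t => QAdd (F j) t) b l) = \sum_(j <- l) qeval e (F j) + qeval e b.
Proof. by elim: l => [|j l IH] /=; rewrite ?big_nil ?add0r // big_cons IH addrA. Qed.

Lemma sum_posl (F : nat -> Q) : \sum_(j <- posl) F j = \sum_(i < d | (0 < (i : nat))%N) F i.
Proof. by rewrite /posl big_map big_filter big_enum_cond. Qed.

Definition xv (e : nat -> Q) : 'rV[Q]_d := \row_i e (i : nat).
Definition yv (e : nat -> Q) : 'rV[Q]_d := \row_i e (d + i)%N.

Lemma EQ_sem (e : nat -> Q) : qeval e Lt = qeval e Rt <-> space2 (xv e) (yv e) = time (xv e) (yv e) ^+ 2.
Proof.
rewrite /Lt /Rt !qeval_foldr !sum_posl /= time_eq space2_eq /S2 !mxE addn0.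
set SL := \sum_(i < d | _) _; set SR := \sum_(i < d | _) _.
have -> : \sum_(i < d | (0 < (i : nat))%N) (xv e - yv e) 0 i ^+ 2 = SL - SR.
  rewrite /SL /SR -sumrB; apply: eq_bigr => i _; rewrite !mxE; ring.
split => h.
  have -> : SL - SR = (SL + (e 0%N * e d + e 0%N * e d)) - (SR + (e 0%N * e 0%N + e d * e d)) + (e 0%N - e d) ^+ 2 by ring.
  by rewrite h subrr add0r.
have -> : SL + (e 0%N * e d + e 0%N * e d) = (SL - SR) + SR + (e 0%N * e d + e 0%N * e d) by ring.
by rewrite h; ring.
Qed.


Lemma PH_sem eB e : holds IOb Ph W eB e PHf <-> photon (eB 0%N) (xv e) (yv e).
Proof.
rewrite /= /upd /=; split.
  by move=> [p [b [hp [hx hy]]]]; exists p, b; split.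
by move=> [p [b [hp hx hy]]]; exists p, b; split.
Qed.

Lemma phi0_sem eB e : holds IOb Ph W eB e phi0 <->
  (photon (eB 0%N) (xv e) (yv e) <-> space2 (xv e) (yv e) = time (xv e) (yv e) ^+ 2).
Proof.
have hP := PH_sem eB e; have hE := EQ_sem e.
rewrite /phi0 /=; rewrite /= in hE; split.
  by move=> [h1 h2]; split => h; [apply/hE; apply: h1; apply/hP | apply/hP; apply: h2; apply/hE].
by move=> [h1 h2]; split => h; [apply/hE; apply: h1; apply/hP | apply/hP; apply: h2; apply/hE].
Qed.

Lemma holds_phiL eB eQ h : holds IOb Ph W (upd eB 0 h) eQ phiL <->
  forall x y, photon h x y <-> space2 x y = time x y ^+ 2.
Proof.
rewrite /phiL holds_foldQ; split.
  move=> H x y.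
  pose e' j := if (j < d)%N then x 0 (insubd i0 j) else if (j < d + d)%N then y 0 (insubd i0 (j - d)%N) else eQ j.
  have he : forall j, j \notin iota 0 (d + d) -> e' j = eQ j.
    move=> j; rewrite mem_iota add0n /= => hj; rewrite /e'.
    have hj' : ~~ (j < d)%N by apply: contra hj => hj; apply: leq_trans hj (leq_addr _ _).
    by rewrite (negbTE hj') (negbTE hj).
  have := H e' he; rewrite phi0_sem /upd /=.
  have -> : xv e' = x by apply/rowP => i; rewrite !mxE /e' ltn_ord valKd.
  have -> : yv e' = y.
    apply/rowP => i; rewrite !mxE /e' ltnNge leq_addr /= ltn_add2l ltn_ord addKn.
    by rewrite valKd.
  by [].
move=> H e' _; rewrite phi0_sem /upd /=; apply: H.
Qed.

End SRpart.

Lemma light_all B IOb Ph W : SR IOb Ph W ->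
  forall h, IOb h -> forall x y, @photon B Ph W h x y <-> Nl x y.
Proof.
move=> [SPR [m0 [c [hm0 hc hl]]] _ _ [_ hS2]] h hh.
have [p [b [hp hx hy]]] := hS2 m0 hm0.
have := proj1 (hl 0 (pt11 Q d)) (ex_intro _ p (ex_intro _ b (And3 hp hx hy))).
have tp : time 0 (pt11 Q d) = -1 by rewrite time_eq !mxE sub0r.
have sp : space2 0 (pt11 Q d) = 1.
  rewrite space2_eq /S2 (bigD1 i1) //= big1 ?addr0.
    by rewrite !mxE /= sub0r sqrrN expr1n.
  move=> i /andP[hi hne]; rewrite !mxE.
  have : (2 <= i)%N.
    have hi1 : (i : nat) != 1%N by apply: contra hne => /eqP e; apply/eqP/val_inj.
    by move: hi hi1; case: (i : nat) => [|[|n]].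
  by rewrite leqNgt => /negbTE ->; rewrite subrr expr0n.
rewrite tp sp sqrrN expr1n mulr1 => hc2.
have c1 : c = 1.
  have : (c - 1) * (c + 1) = 0 by rewrite -subr_sqr -hc2 expr1n subrr.
  move/eqP; rewrite mulf_eq0 => /orP[/eqP h1|/eqP h1]; first by lra.
  by lra.
have H0 : forall x y, photon Ph W m0 x y <-> space2 x y = time x y ^+ 2.
  by move=> x y; rewrite /photon hl c1 expr1n mul1r.
pose eB := fun _ : nat => h; pose eQ := fun _ : nat => (0 : Q).
have := (proj1 (SPR phiL fvB_phiL eB eQ m0 h hm0 hh)) (proj2 (holds_phiL IOb Ph W eB eQ m0) H0).
rewrite holds_phiL => H x y.
rewrite H /Nl -interval; split => e; lra.
Qed.

Lemma distinguish (y y' : 'rV[Q]_d) : y != y' -> exists z, Nl y z /\ ~ Nl y' z.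
Proof.
move=> hne; pose w := y - y'.
have nw : w != 0 by rewrite /w subr_eq0.
case: (eqVneq (qf w) 0) => hw; last first.
  exists y; split; first exact: Nl_refl.
  by rewrite /Nl -opprB qfN => h; move/eqP: hw; apply.
have [s [hs hB]] : exists s : Q, s ^+ 2 = 1 /\ Bf w (ee i0 + s *: ee i1) != 0.
  case: (eqVneq (Bf w (ee i0 + 1 *: ee i1)) 0) => h1; last by exists 1; rewrite expr1n.
  exists (-1); split; first by rewrite sqrrN expr1n.
  apply/eqP => h2; move: h1 h2; rewrite !Bf_pp // mul1r mulN1r opprK => h1 h2.
  have w0 : w 0 i0 = 0 by lra.
  by move/eqP: nw; apply; apply: qf_time0.
exists (y + (ee i0 + s *: ee i1)); split.
  by rewrite /Nl (_ : y - (y + (ee i0 + s *: ee i1)) = - (ee i0 + s *: ee i1)) ?qfN ?qf_pp //; vec.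
rewrite /Nl (_ : y' - (y + (ee i0 + s *: ee i1)) = - (w + (ee i0 + s *: ee i1))); last by rewrite /w; vec.
rewrite qfN qfD hw qf_pp // add0r addr0 => h; move: hB; rewrite (_ : Bf w _ = 0) ?eqxx //.
by apply/eqP; move/eqP: h; rewrite mulf_eq0 (negbTE two_neq0).
Qed.

End Geo.

Unset Implicit Arguments. Set Strict Implicit. Set Printing Implicit Defensive.

Theorem corollary3p6 (d : nat) (hd : (3 <= d)%N) (Q : realFieldType) (B : Type)
  (IOb : B -> Prop) (Ph : B -> B -> Prop) (W : B -> B -> 'rV[Q]_d -> Prop) :
  SR IOb Ph W ->
  forall m k : B, IOb m -> IOb k ->
  exists P : 'rV[Q]_d -> 'rV[Q]_d,
    poincare P /\ forall x y : 'rV[Q]_d, wview W m k x y <-> y = P x.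
Proof.
move=> hSR m k hm hk.
have hl := light_all hd hSR.
move: hSR => [SPR _ E _ [Sym _]].
have evdist : forall h, IOb h -> forall y y', ev_eq W h y h y' -> y = y'.
  move=> h hh y y' he; apply/eqP/negPn/negP => hne.
  have [z [h1 h2]] := distinguish hd hne.
  have [p [b [hp hy hz]]] := proj2 (hl h hh y z) h1.
  apply: h2; apply/(hl h hh); exists p, b; split => //; by apply/(he p).
have hf : forall x, {y | ev_eq W m x k y}.
  by move=> x; apply: constructive_indefinite_description; apply: E.
pose f x := sval (hf x).
have fspec : forall x, ev_eq W m x k (f x) by move=> x; exact: (svalP (hf x)).
have funiq : forall x y, ev_eq W m x k y -> y = f x.
  move=> x y he; apply: (evdist k hk) => b; split => h.
    by apply/(fspec x b)/(he b).
  by apply/(he b)/(fspec x b).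
exists f; split; last first.
  by move=> x y; split; [exact: funiq | move=> ->; exact: fspec].
apply: (geo_main hd).
- move=> x y; rewrite -(hl k hk) -(hl m hm).
  by split => -[p [b [hp h1 h2]]]; exists p, b; split => //; apply/(fspec _ p).
- move=> y; have [x hx] := E k m y hk hm; exists x; symmetry; apply: funiq => b.
  by split => h; [apply/(hx b) | apply/(hx b)].
- move=> x x' e; apply: (evdist m hm) => b.
  by split => h; [apply/(fspec x' b); rewrite -e; apply/(fspec x b) | apply/(fspec x b); rewrite e; apply/(fspec x' b)].
- by move=> x y t1 t2; exact: (Sym m k x y (f x) (f y) hm hk t1 t2 (fspec x) (fspec y)).
Qed.
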